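(* Let $\beta>0$ and let $S$ be a possible forest with vertex set $\{v_{s_1},\dots,v_{s_k}\}$, $s_1<\dots<s_k$. Then for every $t\ge s_k$, the probability that $S$ is a subgraph of $G^t_{1,\beta}$ is \[ \Pr(S\subset G^t_{1,\beta})=\frac{\beta}{\beta+d_S^{\mathrm{in}}(v_1)}\prod_{\substack{1\le i\le t:\\ v_i\in V^-}}\frac{\Gamma(1+\beta+d_S^{\mathrm{in}}(v_i))}{\Gamma(1+\beta)}\prod_{\substack{1<i\le t:\\ v_i\in V^+}}\frac{1}{(2+\beta)(i-1)-2}\prod_{\substack{1<i\le t:\\ v_i\notin V^+}}\left(1+\frac{c_S(i)}{(2+\beta)(i-1)-2}\right). \]
   Context: Fix a real $\beta>0$ and a positive integer $m$. The random tree process $(G^n_{1,\beta})_{n\ge1}$ is defined as follows. $G^1_{1,\beta}$ consists of a single vertex $v_1$ and no edges. Given $G^n_{1,\beta}$ with vertices $v_1,\dots,v_n$ and directed edges $e_2,\dots,e_n$ (where $e_i$ is the edge whose tail is $v_i$), $G^{n+1}_{1,\beta}$ is obtained by adding a vertex $v_{n+1}$ and a directed edge $e_{n+1}$ with tail $v_{n+1}$ and head a ''target vertex'' determined by a random variable $f_{n+1}$, independent of $f_2,\dots,f_n$, taking values in $\Omega_{n+1}=\{(i,v):1\le i\le n\}\cup\{(i,h),(i,t):2\le i\le n\}$ with $\Pr(f_{n+1}=(i,v))=\beta/((2+\beta)n-2)$ and $\Pr(f_{n+1}=(i,h))=\Pr(f_{n+1}=(i,t))=1/((2+\beta)n-2)$.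 If $f_{n+1}=(i,v)$ the target is $v_i$ (chosen ''uniformly''); if $f_{n+1}=(i,h)$ the target is the head of $e_i$, and if $f_{n+1}=(i,t)$ the target is the tail $v_i$ of $e_i$ (chosen ''preferentially'', by copying the head half-edge, resp. tail half-edge, of $e_i$). Consequently the target is $v_i$ with probability $(d_n(v_i)+\beta)/((2+\beta)n-2)$, where $d_n(v)$ is the degree of $v$ in $G^n_{1,\beta}$. Each edge is regarded as two half-edges, one at each endpoint; the degree of a vertex is the number of half-edges at it (loops count twice). A possible forest is a directed forest $S$ whose vertices are labelled vertices $v_i$ of the process (identified by their index), with no isolated vertices, in which every vertex has out-degree $0$ or $1$, every edge $(v_i,v_j)$ has $i>j$, and $v_1$ (if present) has out-degree $0$. ''$S\subset G^t_{1,\beta}$'' means every edge $(v_i,v_j)$ of $S$ is an edge of $G^t_{1,\beta}$ (with labels matching). $d_S^{\mathrm{in}}(v)$ is the in-degree of $v$ in $S$ (taken to be $0$ if $v\notin V(S)$). $V^-=\{v_i\in V(S):\exists j>i,\ (v_j,v_i)\in E(S)\}$, $V^+=\{v_i\in V(S):\exists j<i,\ (v_i,v_j)\in E(S)\}$. For $t\ge i$, $R_t(i)=|\{j>t:(v_j,v_i)\in E(S)\}|$, and $c_S(i)=\sum_{k=1}^{i-1}R_{i-1}(k)$, i.e. the number of edges of $S$ from $\{v_i,v_{i+1},\dots\}$ to $\{v_1,\dots,v_{i-1}\}$. *)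

(* Defs.v *)
From HB Require Import structures.
From mathcomp Require Import all_boot all_order all_algebra.
Set Implicit Arguments. Unset Strict Implicit. Unset Printing Implicit Defensive.
Import Order.TTheory GRing.Theory Num.Theory.
Local Open Scope ring_scope.

(* Vertex v_i is identified with the natural number i (i >= 1).
   A state G^n is encoded by the list hs of heads of the edges e_2,...,e_n:
   the head of e_i is nth 0 hs (i-2). *)

Definition headof (hs : seq nat) (i : nat) : nat := nth 0%N hs (i - 2)%N.

Inductive kind := KV | KH | KT.

(* Omega_{n+1} = {(i,v) : 1<=i<=n} u {(i,h),(i,t) : 2<=i<=n}. *)
Definition omega (n : nat) : seq (nat * kind) :=
  [seq (i, KV) | i <- iota 1 n] ++ [seq (i, KH) | i <- iota 2 n.-1]
  ++ [seq (i, KT) | i <- iota 2 n.-1].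

Definition denom {R : realFieldType} (beta : R) (n : nat) : R :=
  (2 + beta) * n%:R - 2.

Definition pf {R : realFieldType} (beta : R) (n : nat) (w : nat * kind) : R :=
  match w.2 with
  | KV => beta / denom beta n
  | KH => 1 / denom beta n
  | KT => 1 / denom beta n
  end.

Definition target (hs : seq nat) (w : nat * kind) : nat :=
  match w.2 with
  | KV => w.1
  | KH => headof hs w.1
  | KT => w.1
  end.

(* run k n hs F = expectation of F(state after k more steps), starting from
   the state hs of G^n; the f's are independent with laws pf. *)
Fixpoint run {R : realFieldType} (beta : R) (k n : nat) (hs : seq nat)
  (F : seq nat -> R) : R :=
  match k with
  | 0 => F hs
  | k'.+1 => \sum_(w <- omega n) pf beta n w * run beta k' n.+1 (rcons hs (target hs w)) F
  end.

Definition Prob {R : realFieldType} (beta : R) (t : nat) (P : pred (seq nat)) : R :=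
  run beta t.-1 1 [::] (fun hs => if P hs then 1 else 0).

(* A possible forest S is given by its list of edges E, an edge (i,j) meaning
   (v_i, v_j); its vertex set is the set of endpoints (no isolated vertices). *)
Definition possible_forest (E : seq (nat * nat)) : Prop :=
  [/\ uniq E,
      (forall e, e \in E -> (1 <= e.2)%N /\ (e.2 < e.1)%N)
    & uniq (map fst E)].   (* out-degree 0 or 1 *)

Definition vertices (E : seq (nat * nat)) : seq nat :=
  [seq e.1 | e <- E] ++ [seq e.2 | e <- E].

Definition subgraph_of (E : seq (nat * nat)) (t : nat) (hs : seq nat) : bool :=
  all (fun e => (2 <= e.1 <= t)%N && (headof hs e.1 == e.2)) E.

Definition din (E : seq (nat * nat)) (v : nat) : nat := count (fun e => e.2 == v) E.
Definition inVminus (E : seq (nat * nat)) (i : nat) : bool :=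
  has (fun e => (e.2 == i) && (i < e.1)%N) E.
Definition inVplus (E : seq (nat * nat)) (i : nat) : bool :=
  has (fun e => (e.1 == i) && (e.2 < i)%N) E.
Definition Rt (E : seq (nat * nat)) (t i : nat) : nat :=
  count (fun e => (t < e.1)%N && (e.2 == i)) E.
Definition cS (E : seq (nat * nat)) (i : nat) : nat :=
  (\sum_(1 <= k < i) Rt E i.-1 k)%N.

(* Gamma(x + d) / Gamma(x) for a natural number d (Gamma is not available in
   the library; for integer d this ratio is the rising factorial). *)
Definition gamma_ratio {R : realFieldType} (x : R) (d : nat) : R :=
  \prod_(j < d) (x + j%:R).

(* Main.v *)
Require Import Defs.
From HB Require Import structures.
From mathcomp Require Import all_boot all_order all_algebra ssrAC.
Import Order.TTheory GRing.Theory Num.Theory.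
Local Open Scope ring_scope.
Set Implicit Arguments. Unset Strict Implicit. Unset Printing Implicit Defensive.


Section Aux.
Variable R : realFieldType.

Lemma GR_Sl (a : R) m : gamma_ratio a m.+1 = a * gamma_ratio (a + 1) m.
Proof.
rewrite /gamma_ratio big_ord_recl addr0; congr (_ * _).
by apply: eq_bigr => i _; rewrite lift0 /= -natr1 -addrA [1 + _]addrC.
Qed.

Lemma GR_Sr (a : R) m : gamma_ratio a m.+1 = gamma_ratio a m * (a + m%:R).
Proof. by rewrite /gamma_ratio big_ord_recr. Qed.

Lemma GR0 (a : R) : gamma_ratio a 0 = 1.
Proof. by rewrite /gamma_ratio big_ord0. Qed.

Lemma sum_const_seq (T : Type) (s : seq T) (c : R) :
  \sum_(x <- s) c = c * (size s)%:R.
Proof.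
elim: s => [|x s IH]; first by rewrite big_nil mulr0.
by rewrite big_cons IH /= -natr1 mulrDr mulr1 addrC.
Qed.

Lemma sum_pick (r : seq nat) x (g : nat -> R) : x \in r -> uniq r ->
  \sum_(j <- r) (x == j)%:R * g j = g x.
Proof.
move=> xr ur; rewrite (bigD1_seq x) //= eqxx mul1r big1 ?addr0 //.
by move=> j; rewrite eq_sym => /negbTE ->; rewrite mul0r.
Qed.

Lemma sum_count (s r : seq nat) (g : nat -> R) : all (mem r) s -> uniq r ->
  \sum_(x <- s) g x = \sum_(j <- r) (count_mem j s)%:R * g j.
Proof.
move=> + ur; elim: s => [|x s IH] /=.
  by move=> _; rewrite big_nil big1 // => j _; rewrite mul0r.
move=> /andP [xr /IH IHs]; rewrite big_cons IHs -(sum_pick g xr ur) -big_split /=.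
by apply: eq_bigr => j _; rewrite natrD mulrDl.
Qed.

End Aux.


Definition k2n (k : kind) : nat := match k with KV => 0 | KH => 1 | KT => 2 end.
Definition n2k (n : nat) : kind := match n with 0 => KV | 1 => KH | _ => KT end.
Lemma k2nK : cancel k2n n2k. Proof. by case. Qed.
HB.instance Definition _ := Equality.copy kind (can_type k2nK).

Definition valid (n : nat) (hs : seq nat) : bool :=
  [&& (0 < n)%N, size hs == n.-1 & all (fun x => (0 < x <= n)%N) hs].

Definition deg (hs : seq nat) (k : nat) : nat :=
  (((1 < k) && (k <= (size hs).+1))%N : nat) + count_mem k hs.

Lemma target_range n hs w : valid n hs -> w \in omega n ->
  (0 < target hs w <= n)%N.
Proof.
move=> /and3P [n0 /eqP sz /allP al].
rewrite /omega !mem_cat => /or3P [] /mapP [i + ->]; rewrite mem_iota /=.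
- by rewrite add1n ltnS.
- move=> /andP [i2 ilt]; apply: al; rewrite /headof; apply: mem_nth.
  by rewrite sz -(ltn_add2l 2) subnKC.
- move=> /andP [i2 ilt]; rewrite (leq_trans _ i2) //= -ltnS.
  by apply: (leq_trans ilt); rewrite add2n prednK.
Qed.

Lemma target_sum (R : realFieldType) (beta : R) (g : nat -> R) n hs : valid n hs ->
  \sum_(w <- omega n) pf beta n w * g (target hs w) =
  \sum_(j <- iota 1 n) ((deg hs j)%:R + beta) / denom beta n * g j.
Proof.
move=> /and3P [n0 /eqP sz al].
case: n n0 sz al => // m _ /= sz al.
set D := denom beta m.+1.
rewrite /omega !big_cat !big_map /=.
have -> : \sum_(j <- iota 1 m.+1) ((deg hs j)%:R + beta) / D * g j =
  \sum_(j <- iota 1 m.+1) beta / D * g j +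
  (\sum_(j <- iota 1 m.+1) (count_mem j hs)%:R * (1 / D * g j) +
  \sum_(j <- iota 1 m.+1) ((((1 < j) && (j <= (size hs).+1))%N : nat)%:R / D * g j)).
  rewrite -!big_split /=; apply: eq_bigr => j _.
  rewrite /deg natrD !mulrDl mul1r mulrA addrC; congr (_ + _); exact: addrC.
rewrite /pf /target /= -(sum_count (fun j => 1 / D * g j)); last 2 first.
  by apply/allP => x /(allP al) /andP [x0 xm]; have : x \in iota 1 m.+1 by rewrite mem_iota add1n ltnS x0.
  exact: (iota_uniq 1 m.+1).
congr (_ + (_ + _)).
- rewrite (iotaDl 2 0) big_map -{2}(mkseq_nth 0 hs) /mkseq big_map sz.
  by apply: eq_bigr => i _; rewrite /headof addKn.
- rewrite big_cons /= mul0r mul0r add0r !big_seq; apply: eq_bigr => j.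
  by rewrite mem_iota sz => /andP [j2 jm]; rewrite j2 /= -ltnS -[m.+2]add2n jm.
Qed.


Definition Ein (E : seq (nat * nat)) (hs : seq nat) : bool :=
  all (fun e => (e.1 <= (size hs).+1)%N ==> (headof hs e.1 == e.2)) E.

Lemma Ein_rcons E hs j : (forall e, e \in E -> (2 <= e.1)%N) ->
  Ein E (rcons hs j) = Ein E hs && all (fun e => (e.1 == (size hs).+2) ==> (j == e.2)) E.
Proof.
move=> H; rewrite /Ein -all_predI; apply: eq_in_all => e /H e2 /=.
rewrite size_rcons /headof nth_rcons.
case: (ltngtP e.1 (size hs).+2) => h.
- have h1 : (e.1 <= (size hs).+1)%N by rewrite -ltnS.
  by rewrite h1 (ltn_subLR _ e2) add2n h /= andbT.
- by rewrite [(e.1 <= _)%N]leqNgt (ltnW h).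
- by rewrite h -addn2 addnK ltnn eqxx /= addn2 ltnn.
Qed.

Lemma deg_rcons hs j k :
  deg (rcons hs j) k = (deg hs k + (k == (size hs).+2) + (k == j))%N.
Proof.
rewrite /deg size_rcons -cats1 count_cat /= addn0 [(k == j)%N]eq_sym addnA; congr (_ + _).
suff -> : ((1 < k <= (size hs).+2)%N : nat) = ((1 < k <= (size hs).+1)%N : nat) + (k == (size hs).+2)%N by rewrite addnAC.
case: (ltngtP k (size hs).+2) => h.
- by rewrite ltnS in h; rewrite h; case: (1 < k)%N.
- by rewrite [(k <= _)%N]leqNgt (ltnW h) andbF.
- by rewrite h ltnn andbF andbT.
Qed.

Lemma Rt_split E n k : Rt E n k =
  (Rt E n.+1 k + count (fun e => (e.1 == n.+1) && (e.2 == k)) E)%N.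
Proof.
elim: E => //= e E ->; rewrite addnACA; congr (_ + _).
case: (e.2 == k); rewrite ?andbF ?andbT //.
by case: (ltngtP e.1 n.+1).
Qed.


Lemma sum_deg (R : realFieldType) (beta : R) n hs : valid n hs ->
  \sum_(j <- iota 1 n) ((deg hs j)%:R + beta) = denom beta n.
Proof.
move=> /and3P [n0 /eqP sz al]; case: n n0 sz al => // m _ sz al; simpl in sz.
rewrite big_split sum_const_seq size_iota.
have -> : \sum_(j <- iota 1 m.+1) (deg hs j)%:R = (m + m)%:R :> R.
  rewrite /deg; under eq_bigr do rewrite natrD. rewrite big_split natrD.
  congr (_ + _).
    rewrite big_cons /= add0r big_seq (eq_bigr (fun _ => 1)); last first.
      by move=> j; rewrite mem_iota sz => /andP [j2 jm]; rewrite j2 /= -ltnS -[m.+2]add2n jm.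
    by rewrite -big_seq sum_const_seq size_iota mul1r.
  have -> : (m%:R : R) = \sum_(x <- hs) 1 by rewrite sum_const_seq mul1r sz.
  rewrite (sum_count (fun _ => 1 : R) (r := iota 1 m.+1)); last exact: iota_uniq.
    by apply: eq_bigr => j _; rewrite mulr1.
  apply/allP => x /(allP al) /andP [x0 xm].
  by have : x \in iota 1 m.+1 by rewrite mem_iota add1n ltnS x0.
by rewrite /denom mulrDl [beta * _]mulrC -natrM addrAC mul2n doubleS -addnn -addn2 !natrD addrK.
Qed.

Lemma in_iota m n k : k \in iota m n -> (m <= k < m + n)%N.
Proof. by rewrite mem_iota. Qed.

Definition Xf (R : realFieldType) (beta : R) E (hs : seq nat) : R :=
  (Ein E hs)%:R * \prod_(k <- iota 1 (size hs).+1)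
     gamma_ratio ((deg hs k)%:R + beta) (Rt E (size hs).+1 k).

Definition fac (R : realFieldType) (beta : R) E n : R :=
  gamma_ratio (1 + beta) (din E n.+1) *
  (if inVplus E n.+1 then 1 / denom beta n else 1 + (cS E n.+1)%:R / denom beta n).

Lemma denom_gt0 (R : realFieldType) (beta : R) n : 0 < beta -> (0 < n)%N -> 0 < denom beta n.
Proof.
move=> b0; case: n => // m _.
rewrite /denom -(natr1 m) mulrDr mulr1 [2 + beta]addrC addrA addrK.
by apply: ltr_wpDl => //; apply: mulr_ge0 => //; apply: addr_ge0 => //; apply: ltW.
Qed.

Lemma prod_bump (R : realFieldType) (r : seq nat) (a : nat -> R) (rr : nat -> nat) j :
  j \in r -> uniq r ->
  a j * \prod_(k <- r) gamma_ratio (a k + (k == j)%:R) (rr k) =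
  \prod_(k <- r) gamma_ratio (a k) (rr k) * (a j + (rr j)%:R).
Proof.
move=> jr ur; rewrite !(bigD1_seq j) //= eqxx.
rewrite (eq_bigr (fun k => gamma_ratio (a k) (rr k))); last first.
  by move=> k /negbTE ->; rewrite addr0.
by rewrite mulrA -GR_Sl GR_Sr mulrAC.
Qed.

Lemma prod_dec (R : realFieldType) (r : seq nat) (a : nat -> R) (rr : nat -> nat) j :
  j \in r -> uniq r ->
  \prod_(k <- r) gamma_ratio (a k) (rr k + (j == k))%N =
  a j * \prod_(k <- r) gamma_ratio (a k + (k == j)%:R) (rr k).
Proof.
move=> jr ur; rewrite !(bigD1_seq j) //= eqxx addn1 GR_Sl mulrA.
congr (_ * _); apply: eq_bigr => k /negbTE kj.
by rewrite kj eq_sym kj addr0 addn0.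
Qed.

Lemma Rt_top E n : (forall e, e \in E -> (e.2 < e.1)%N) -> Rt E n n = din E n.
Proof.
move=> H; apply: eq_in_count => e /H h /=.
by case: eqP => [<-|]; rewrite ?andbT ?andbF.
Qed.

Lemma X_rcons (R : realFieldType) (beta : R) E hs j :
  (forall e, e \in E -> (1 <= e.2 < e.1)%N) ->
  all (fun x => (0 < x <= (size hs).+1)%N) hs -> j \in iota 1 (size hs).+1 ->
  Xf beta E (rcons hs j) =
  (Ein E hs && all (fun e => (e.1 == (size hs).+2) ==> (j == e.2)) E)%:R *
  \prod_(k <- iota 1 (size hs).+1)
     gamma_ratio ((deg hs k)%:R + beta + (k == j)%:R) (Rt E (size hs).+2 k) *
  gamma_ratio (1 + beta) (din E (size hs).+2).
Proof.
move=> H al jin.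
have H2 : forall e, e \in E -> (2 <= e.1)%N.
  by move=> e /H /andP [h1 h2]; apply: leq_ltn_trans h2.
rewrite /Xf Ein_rcons // size_rcons -mulrA; congr (_ * _).
have -> : iota 1 (size hs).+2 = iota 1 ((size hs).+1 + 1) by rewrite addn1.
rewrite iotaD big_cat big_seq1 add1n; congr (_ * _).
  rewrite !big_seq; apply: eq_bigr => k kin.
  rewrite deg_rcons natrD natrD.
  have -> : (k == (size hs).+2) = false.
    by move: kin => /in_iota; rewrite add1n => /andP [_ /ltn_eqF].
  by rewrite /= addr0 addrAC.
rewrite Rt_top; last by move=> e /H /andP [].
have c0 : count_mem (size hs).+2 hs = 0%N.
  by apply/count_memPn; apply/negP => /(allP al) /andP [_]; rewrite ltnn.
have jn : ((size hs).+2 == j) = false.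
  by move: jin => /in_iota; rewrite add1n => /andP [_ /gtn_eqF].
rewrite deg_rcons /deg c0 jn eqxx ltnn andbF /=.
by rewrite addrC.
Qed.


Lemma step (R : realFieldType) (beta : R) E hs :
  0 < beta -> (forall e, e \in E -> (1 <= e.2 < e.1)%N) -> uniq (map fst E) ->
  all (fun x => (0 < x <= (size hs).+1)%N) hs ->
  \sum_(w <- omega (size hs).+1) pf beta (size hs).+1 w * Xf beta E (rcons hs (target hs w))
  = fac beta E (size hs).+1 * Xf beta E hs.
Proof.
move=> b0 H Hu al.
have vh : valid (size hs).+1 hs by rewrite /valid /= eqxx al.
rewrite (target_sum beta (fun j => Xf beta E (rcons hs j)) vh) big_seq.
rewrite (eq_bigr (fun j => ((deg hs j)%:R + beta) / denom beta (size hs).+1 *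
  ((Ein E hs && all (fun e => (e.1 == (size hs).+2) ==> (j == e.2)) E)%:R *
  \prod_(k <- iota 1 (size hs).+1)
     gamma_ratio ((deg hs k)%:R + beta + (k == j)%:R) (Rt E (size hs).+2 k) *
  gamma_ratio (1 + beta) (din E (size hs).+2)))); last first.
  by move=> j jin; rewrite X_rcons.
rewrite -big_seq /fac /Xf.
set n := (size hs).+1.
set D := denom beta n.
set G1 := gamma_ratio (1 + beta) (din E n.+1).
set a := fun k => (deg hs k)%:R + beta.
have D0 : D != 0 by rewrite gt_eqF // denom_gt0.
set P := fun e : nat * nat => e.1 == n.+1.
have sz1 : (size (filter P E) <= 1)%N.
  rewrite size_filter -(count_map fst (pred1 n.+1)) count_uniq_mem //.
  by apply: leq_b1.
have EQ : forall j, all (fun e => (e.1 == n.+1) ==> (j == e.2)) E =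
   all (fun e => j == e.2) (filter P E) by move=> j; rewrite all_filter.
have ERt : forall k, Rt E n k = (Rt E n.+1 k + count (fun e => e.2 == k) (filter P E))%N.
  move=> k; rewrite Rt_split count_filter; congr (_ + _)%N.
  by apply: eq_count => e /=; rewrite andbC.
have EV : inVplus E n.+1 = (filter P E != [::]).
  rewrite /inVplus has_filter; congr (_ != _); apply: eq_in_filter => e /H /andP [_ h].
  by rewrite /P; case: eqP => [<-|] //=; rewrite h.
have cSE : (cS E n.+1)%:R = \sum_(k <- iota 1 n) (Rt E n k)%:R :> R.
  by rewrite /cS natr_sum /index_iota subn1.
rewrite EV cSE.
case Ef : (filter P E) sz1 => [|e0 [|e1 s]] // _.
- have Rn : forall k, Rt E n k = Rt E n.+1 k by move=> k; rewrite ERt Ef addn0.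
  under [in RHS]eq_bigr do rewrite Rn.
  rewrite [LHS]big_seq [LHS](eq_bigr (fun j => (Ein E hs)%:R * G1 / D * (\prod_(k <- iota 1 n)
     gamma_ratio ((deg hs k)%:R + beta) (Rt E n.+1 k) * (((deg hs j)%:R + beta) + (Rt E n.+1 j)%:R)))); last first.
    move=> j jin; rewrite EQ Ef andbT -(prod_bump (fun k => (deg hs k)%:R + beta)) //; last exact: iota_uniq.
    by rewrite [LHS](AC (2*3) (((3*5)*2)*(1*4))).
  rewrite -big_seq -mulr_sumr -mulr_sumr big_split /= (sum_deg beta vh) -/D.
  under [X in _ + X / D]eq_bigr do rewrite Rn.
  have -> : forall C, 1 + C / D = (D + C) / D by move=> C; rewrite mulrDl divff.
  by rewrite [LHS](AC (3*2) ((2*(5*3))*(1*4))).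
- have : e0 \in filter P E by rewrite Ef mem_seq1.
  rewrite mem_filter => /andP [/eqP Pe0 e0E].
  have j0in : e0.2 \in iota 1 n.
    by move: (H _ e0E); rewrite Pe0 mem_iota add1n ltnS.
  rewrite [LHS](eq_bigr (fun i => (e0.2 == i)%:R * (((deg hs i)%:R + beta) / D * ((Ein E hs)%:R *
     \prod_(k <- iota 1 n) gamma_ratio ((deg hs k)%:R + beta + (k == i)%:R) (Rt E n.+1 k) * G1)))); last first.
    move=> i _; rewrite EQ Ef /= andbT.
    rewrite [i == _]eq_sym; case: (e0.2 == i); rewrite ?andbT ?andbF; first by rewrite /= mulr1n mul1r.
    by rewrite /= mulr0n !mul0r mulr0.
  rewrite (sum_pick (fun i => ((deg hs i)%:R + beta) / D * ((Ein E hs)%:R *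
     \prod_(k <- iota 1 n) gamma_ratio ((deg hs k)%:R + beta + (k == i)%:R) (Rt E n.+1 k) * G1))) //; last exact: iota_uniq.
  under [in RHS]eq_bigr do rewrite ERt Ef /= addn0.
  rewrite (prod_dec (fun k => (deg hs k)%:R + beta)) //; last exact: iota_uniq.
  by rewrite div1r [LHS](AC (2*3) ((5*2)*(3*(1*4)))).
Qed.


Lemma valid_rcons n hs x : valid n hs -> (0 < x <= n)%N -> valid n.+1 (rcons hs x).
Proof.
move=> /and3P [n0 /eqP sz al] xn; rewrite /valid /= size_rcons sz prednK // eqxx /=.
rewrite all_rcons (leq_trans _ (leqnSn n)) ?andbT /=; last by case/andP: xn.
rewrite (andP xn).1 /=; apply: sub_all al => y /andP [-> /leqW ->].
by [].
Qed.

Lemma run_ext (R : realFieldType) (beta : R) k n hs (F G : seq nat -> R) :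
  valid n hs -> (forall hs', valid (n + k) hs' -> F hs' = G hs') ->
  run beta k n hs F = run beta k n hs G.
Proof.
elim: k n hs => [|k IH] n hs vh FG /=; first by apply: FG; rewrite addn0.
apply: eq_big_seq => w win; congr (_ * _); apply: IH.
  by apply: valid_rcons => //; apply: target_range.
by move=> hs' v; apply: FG; rewrite addnS -addSn.
Qed.

Lemma run_X (R : realFieldType) (beta : R) E k n hs :
  0 < beta -> (forall e, e \in E -> (1 <= e.2 < e.1)%N) -> uniq (map fst E) ->
  valid n hs ->
  run beta k n hs (Xf beta E) = (\prod_(n <= m < n + k) fac beta E m) * Xf beta E hs.
Proof.
move=> b0 H Hu; elim: k n hs => [|k IH] n hs vh /=.
  by rewrite addn0 big_geq // mul1r.
rewrite big_seq (eq_bigr (fun w => pf beta n w * ((\prod_(n.+1 <= m < n.+1 + k) fac beta E m) *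
   Xf beta E (rcons hs (target hs w))))); last first.
  move=> w win; rewrite IH //.
  by apply: valid_rcons => //; apply: target_range.
rewrite -big_seq.
under eq_bigr do rewrite mulrCA.
rewrite -mulr_sumr.
move: vh => /and3P [n0 /eqP sz al].
have en : n = (size hs).+1 by rewrite sz prednK.
rewrite en step //; last by rewrite -en.
rewrite [in RHS]big_ltn; last by rewrite addnS ltnS leq_addr.
by rewrite addnS -addSn mulrCA mulrA.
Qed.


Lemma prod_if (R : realFieldType) (r : seq nat) (P : pred nat) (A B : nat -> R) :
  \prod_(i <- r) (if P i then A i else B i) =
  \prod_(i <- r | P i) A i * \prod_(i <- r | ~~ P i) B i.
Proof.
rewrite (bigID P) /=; congr (_ * _); apply: eq_bigr => i.
  by move=> ->.
by move=> /negbTE ->.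
Qed.

Unset Implicit Arguments.

Theorem lemma1 (R : realFieldType) (beta : R) (E : seq (nat * nat)) (t : nat) :
  0 < beta -> possible_forest E -> (1 <= t)%N ->
  (forall v, v \in vertices E -> (v <= t)%N) ->
  Prob beta t (subgraph_of E t) =
    beta / (beta + (din E 1)%:R)
    * (\prod_(1 <= i < t.+1 | inVminus E i) gamma_ratio (1 + beta) (din E i))
    * (\prod_(2 <= i < t.+1 | inVplus E i) (1 / denom beta i.-1))
    * (\prod_(2 <= i < t.+1 | ~~ inVplus E i) (1 + (cS E i)%:R / denom beta i.-1)).
Proof.
move=> b0 [uE H Hu] t1 Hv.
have H' : forall e, e \in E -> (1 <= e.2 < e.1)%N by move=> e /H [-> ->].
have Ht : forall e, e \in E -> (e.1 <= t)%N.
  by move=> e eE; apply: Hv; rewrite /vertices mem_cat; apply/orP; left; apply: map_f.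
case: t t1 Hv Ht => // T _ Hv Ht.
rewrite /Prob -[T.+1.-1]/T.
rewrite (@run_ext R beta T 1 [::] _ (Xf beta E)); last first.
- move=> hs /and3P [_ /eqP sz _]; rewrite /Xf sz add1n.
  rewrite big1 ?mulr1; last first.
    move=> k _; rewrite /Rt (eq_in_count (a2 := pred0)) ?count_pred0 ?GR0 //.
    by move=> e /Ht eT /=; rewrite ltnNge eT.
  have -> : Ein E hs = subgraph_of E T.+1 hs.
    rewrite /Ein /subgraph_of sz; apply: eq_in_all => e eE /=.
    have e2 : (1 < e.1)%N by case/andP: (H' _ eE) => a b; exact: leq_ltn_trans a b.
    by rewrite (Ht _ eE) e2.
  by case: (subgraph_of E T.+1 hs).
- by [].
rewrite run_X //.
have e2 : forall e, e \in E -> (1 < e.1)%N.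
  by move=> e eE; case/andP: (H' _ eE) => a b; exact: leq_ltn_trans a b.
have X0 : Xf beta E [::] = gamma_ratio beta (din E 1).
  have Ein0 : Ein E [::] = true.
    by apply/allP => e eE; rewrite /= leqNgt e2.
  rewrite /Xf Ein0 mul1r big_seq1 Rt_top; last by move=> e /H' /andP [].
  by rewrite -[deg [::] 1]/0%N mulr0n add0r.
have GRb : forall d, gamma_ratio beta d = beta / (beta + d%:R) * gamma_ratio (1 + beta) d.
  move=> d; have nz : beta + d%:R != 0.
    by rewrite gt_eqF // ltr_wpDr.
  apply: (mulIf nz); rewrite -GR_Sr GR_Sl mulrAC divfK //.
  by rewrite addrC.
have din0 : forall i, ~~ inVminus E i -> din E i = 0%N.
  move=> i nv; apply/eqP; rewrite -leqn0 leqNgt -has_count; apply: contra nv.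
  move=> /hasP [e eE /eqP ei]; apply/hasP; exists e => //.
  by rewrite ei eqxx -ei; case/andP: (H' _ eE).
have PV : \prod_(1 <= i < T.+2 | inVminus E i) gamma_ratio (1 + beta) (din E i) =
   gamma_ratio (1 + beta) (din E 1) * \prod_(1 <= i < T.+1) gamma_ratio (1 + beta) (din E i.+1).
  rewrite big_mkcond big_nat_recl //; congr (_ * _).
    by case: ifP => // /negbT nv; rewrite din0 // GR0.
  by apply: eq_bigr => i _; case: ifP => // /negbT nv; rewrite din0 // GR0.
rewrite PV !big_add1 /= X0 GRb ?add1n /fac big_split /= prod_if.
by rewrite [LHS](AC ((1*2)*2) (((4*(5*1))*2)*3)).
Qed.
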